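(* For a multi-unit auction with $2$ bidders and $2$ identical items, where bidders have valuations with decreasing marginal values, no deterministic obviously strategy-proof mechanism that satisfies individual rationality and no negative transfers gives an approximation better than $2$; i.e., for every such mechanism there is a valuation profile $v$ with $\mathrm{OPT}(v)\ge 2\cdot W(v)$, or the ratio $\mathrm{OPT}(v)/W(v)$ has supremum at least $2$.
   Context: Bidder $i$'s valuation is $v_i:\{0,1,2\}\to\mathbb{R}_{\ge0}$ with $v_i(0)=0$ and decreasing marginals: $v_i(1)-v_i(0)\ge v_i(2)-v_i(1)$. The domain $V_i$ is all such valuations; valuations are private, utilities quasi-linear. A deterministic mechanism is a rooted tree: each internal node is assigned to one bidder, who sends one of the messages labeling the outgoing edges; each leaf is labeled with a feasible allocation and a payment per bidder. A behavior $B_i$ specifies a message at every node of bidder $i$; a profile $B$ determines a path $\mathrm{Path}(B)$ with allocation $f_i(B)$ and payment $p_i(B)$. A strategy $\mathcal S_i$ maps each $v_i\in V_i$ to a behavior; it is obviously dominant if for every $v_i\in V_i$, every node $u$ of $i$, every $B_{-i}$ and every profile $B'$ with $u\in\mathrm{Path}(\mathcal S_i(v_i),B_{-i})\cap\mathrm{Path}(B')$ and $B'_i$ sending at $u$ a message different from $\mathcal S_i(v_i)$'s, $v_i(f_i(\mathcal S_i(v_i),B_{-i}))-p_i(\mathcal S_i(v_i),B_{-i})\ge v_i(f_i(B'))-p_i(B')$. The mechanism is OSP if all strategies are obviously dominant; individually rational if for every profile in $V_1\times V_2$ following the strategies gives each bidder utility $\ge0$; satisfies no negative transfers if all payments at all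 leaves are $\ge0$. $W(v)$ is the welfare of the allocation reached on profile $v$ when bidders follow their strategies, $\mathrm{OPT}(v)$ the optimal welfare; approximation better than $2$ means $\sup_v\mathrm{OPT}(v)/W(v)<2$. *)

(* Defs.v *)
From Stdlib Require Import Reals List Bool.
Open Scope R_scope.

Definition bidder := bool.

(** A valuation v : {0,1,2} -> R is represented by the pair (v 1, v 2);
    v 0 = 0 is built in. *)
Definition valuation := (R * R)%type.

Definition val (v : valuation) (k : nat) : R :=
  match k with
  | O => 0
  | S O => fst v
  | _ => snd v
  end.

Definition in_domain (v : valuation) : Prop :=
  0 <= val v 1 /\ 0 <= val v 2 /\ val v 1 - val v 0 >= val v 2 - val v 1.

(** A deterministic mechanism: a rooted tree. *)
Inductive mech (M : Type) : Type :=
| Leaf : (bidder -> nat) -> (bidder -> R) -> mech M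
| Node : bidder -> (M -> mech M) -> mech M.
Arguments Leaf {M} _ _.
Arguments Node {M} _ _.

(** Nodes are identified by their history (sequence of messages from the
    root).  A behavior gives a message at every node (history). *)
Definition behavior (M : Type) := list M -> M.
Definition profile (M : Type) := bidder -> behavior M.

Fixpoint run_from {M : Type} (t : mech M) (h : list M) (B : profile M)
  : (bidder -> nat) * (bidder -> R) :=
  match t with
  | Leaf a p => (a, p)
  | Node i ch => run_from (ch (B i h)) (h ++ (B i h :: nil)) B
  end.

Definition outcome {M : Type} (t : mech M) (B : profile M) := run_from t nil B.
Definition alloc {M : Type} (t : mech M) (B : profile M) (i : bidder) : nat :=
  fst (outcome t B) i.
Definition pay {M : Type} (t : mech M) (B : profile M) (i : bidder) : R :=
  snd (outcome t B) i.

Fixpoint path_from {M : Type} (t : mech M) (h : list M) (B : profile M)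
  : list (list M * bidder) :=
  match t with
  | Leaf _ _ => nil
  | Node i ch => (h, i) :: path_from (ch (B i h)) (h ++ (B i h :: nil)) B
  end.

Definition on_path {M : Type} (t : mech M) (B : profile M) (h : list M) (i : bidder) : Prop :=
  In (h, i) (path_from t nil B).

Definition override {M : Type} (B : profile M) (i : bidder) (b : behavior M) : profile M :=
  fun j => if Bool.eqb j i then b else B j.

Definition utility {M : Type} (v : valuation) (t : mech M) (B : profile M) (i : bidder) : R :=
  val v (alloc t B i) - pay t B i.

Definition strategy (M : Type) := valuation -> behavior M.

Definition obviously_dominant {M : Type} (t : mech M) (i : bidder) (Si : strategy M) : Prop :=
  forall vi : valuation, in_domain vi ->
  forall (h : list M) (Bmi B' : profile M),
    on_path t (override Bmi i (Si vi)) h i ->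
    on_path t B' h i ->
    B' i h <> Si vi h ->
    utility vi t (override Bmi i (Si vi)) i >= utility vi t B' i.

Definition OSP {M : Type} (t : mech M) (S : bidder -> strategy M) : Prop :=
  forall i, obviously_dominant t i (S i).

Definition follow {M : Type} (S : bidder -> strategy M) (v : bidder -> valuation) : profile M :=
  fun j => S j (v j).

Fixpoint all_leaves {M : Type} (P : (bidder -> nat) -> (bidder -> R) -> Prop) (t : mech M) : Prop :=
  match t with
  | Leaf a p => P a p
  | Node _ ch => forall m, all_leaves P (ch m)
  end.

Definition feasible_mech {M : Type} (t : mech M) : Prop :=
  all_leaves (fun a _ => (a true + a false <= 2)%nat) t.

Definition individually_rational {M : Type} (t : mech M) (S : bidder -> strategy M) : Prop :=
  forall v : bidder -> valuation, (forall j, in_domain (v j)) ->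
  forall i, utility (v i) t (follow S v) i >= 0.

Definition no_negative_transfers {M : Type} (t : mech M) : Prop :=
  all_leaves (fun _ p => forall i, 0 <= p i) t.

Definition welfare {M : Type} (t : mech M) (S : bidder -> strategy M) (v : bidder -> valuation) : R :=
  val (v true) (alloc t (follow S v) true) + val (v false) (alloc t (follow S v) false).

Definition OPT (v : bidder -> valuation) : R :=
  fold_right Rmax 0
    (map (fun k => val (v true) (fst k) + val (v false) (snd k))
       ((0,0) :: (1,0) :: (0,1) :: (2,0) :: (1,1) :: (0,2) :: nil)%nat).

(* Main.v *)
Require Import Defs.
From Stdlib Require Import Reals.
From Stdlib Require Import Lra Lia List Bool Classical FunctionalExtensionality.
Open Scope R_scope.

Definition posv (v : valuation) : Prop := in_domain v /\ 0 < fst v.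

Definition mkp (i : bidder) (x y : valuation) : bidder -> valuation :=
  fun b => if Bool.eqb b i then x else y.

Lemma mkp_i : forall i x y, mkp i x y i = x.
Proof. intros i x y; unfold mkp; now rewrite Bool.eqb_reflx. Qed.

Lemma mkp_j : forall i x y, mkp i x y (negb i) = y.
Proof. intros i x y; unfold mkp; destruct i; reflexivity. Qed.

Lemma mkp_pos : forall i x y, posv x -> posv y -> forall j, posv (mkp i x y j).
Proof. intros i x y Hx Hy j; unfold mkp; destruct (Bool.eqb j i); auto. Qed.

Lemma all_leaves_run : forall (M : Type) P (s : mech M), all_leaves P s ->
  forall h B, P (fst (run_from s h B)) (snd (run_from s h B)).
Proof.
  intros M P s; induction s as [a p | b ch IH]; simpl; intros Hall h B.
  - exact Hall.
  - apply IH. apply Hall.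
Qed.

Lemma feas_alloc : forall (M : Type) (t : mech M), feasible_mech t ->
  forall B, (alloc t B true + alloc t B false <= 2)%nat.
Proof.
  intros M t Ht B. unfold alloc, outcome.
  exact (all_leaves_run M _ t Ht nil B).
Qed.

Lemma feas_alloc_i : forall (M : Type) (t : mech M), feasible_mech t ->
  forall B i, (alloc t B i + alloc t B (negb i) <= 2)%nat.
Proof.
  intros M t Ht B i. pose proof (feas_alloc M t Ht B). destruct i; simpl; lia.
Qed.

Lemma nnt_pay : forall (M : Type) (t : mech M), no_negative_transfers t ->
  forall B i, 0 <= pay t B i.
Proof.
  intros M t Ht B i. unfold pay, outcome.
  exact (all_leaves_run M _ t Ht nil B i).
Qed.

Lemma fold_Rmax_ge : forall l x, In x l -> x <= fold_right Rmax 0 l.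
Proof.
  induction l as [|a l IH]; simpl; intros x Hx.
  - destruct Hx.
  - destruct Hx as [-> | Hx].
    + apply Rmax_l.
    + eapply Rle_trans; [apply IH; exact Hx | apply Rmax_r].
Qed.

Definition L6 : list (nat * nat) :=
  ((0,0) :: (1,0) :: (0,1) :: (2,0) :: (1,1) :: (0,2) :: nil)%nat.

Lemma OPT_ge : forall v a b, In (a,b) L6 ->
  val (v true) a + val (v false) b <= OPT v.
Proof.
  intros v a b H. unfold OPT. apply fold_Rmax_ge.
  change (val (v true) a + val (v false) b) with
    ((fun k => val (v true) (fst k) + val (v false) (snd k)) (a,b)).
  apply in_map. exact H.
Qed.

Lemma OPT_mkp : forall i x y a b, In (a,b) L6 -> In (b,a) L6 ->
  val x a + val y b <= OPT (mkp i x y).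
Proof.
  intros i x y a b H1 H2. destruct i.
  - pose proof (OPT_ge (mkp true x y) a b H1) as H.
    replace (mkp true x y true) with x in H by reflexivity.
    replace (mkp true x y false) with y in H by reflexivity. lra.
  - pose proof (OPT_ge (mkp false x y) b a H2) as H.
    replace (mkp false x y true) with y in H by reflexivity.
    replace (mkp false x y false) with x in H by reflexivity. lra.
Qed.

Lemma welfare_mkp : forall (M : Type) (t : mech M) S i x y,
  welfare t S (mkp i x y) =
  val x (alloc t (follow S (mkp i x y)) i) + val y (alloc t (follow S (mkp i x y)) (negb i)).
Proof.
  intros M t S i x y. unfold welfare. destruct i; unfold mkp at 1 2; simpl; [reflexivity | apply Rplus_comm].
Qed.

Lemma val_nonneg : forall v k, in_domain v -> 0 <= val v k.
Proof.
  intros v k [H1 [H2 H3]]. destruct k as [|[|k]]; simpl in *; lra.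
Qed.

Lemma val_le2 : forall v k, in_domain v -> val v k <= 2 * fst v.
Proof.
  intros v k [H1 [H2 H3]]. destruct k as [|[|k]]; simpl in *; lra.
Qed.

Lemma override_follow : forall (M : Type) (S : bidder -> strategy M) i x y,
  override (follow S (mkp i x y)) i (S i x) = follow S (mkp i x y).
Proof.
  intros M S i x y. extensionality b. unfold override, follow, mkp.
  destruct (Bool.eqb b i) eqn:E.
  - apply Bool.eqb_prop in E. subst. reflexivity.
  - reflexivity.
Qed.

Lemma core : forall (M : Type) (t : mech M) (S : bidder -> strategy M) c i h u X,
  feasible_mech t -> OSP t S -> individually_rational t S -> no_negative_transfers t ->
  0 < c -> c < 2 ->
  (forall v : bidder -> valuation, (forall j, in_domain (v j)) -> OPT v <= c * welfare t S v) ->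
  posv u -> 2 * fst u < X ->
  (forall x y, posv x -> posv y -> on_path t (follow S (mkp i x y)) h i) ->
  S i u h <> S i (X,X) h -> False.
Proof.
  intros M t S c i h u X Hf Hosp Hir Hnnt Hc0 Hc2 Happ Hu HX Hon Hne.
  destruct Hu as [Hud Hu1].
  set (K := c * X / (2 - c) + 1).
  assert (HK : (2 - c) * K = c * X + (2 - c)) by (unfold K; field; lra).
  assert (HKpos : 0 < K).
  { unfold K. assert (0 < c * X / (2 - c)).
    { apply Rdiv_lt_0_compat; [apply Rmult_lt_0_compat|]; lra. } lra. }
  set (e := fst u / (c + 1)).
  assert (He : (c + 1) * e = fst u) by (unfold e; field; lra).
  assert (Hepos : 0 < e) by (unfold e; apply Rdiv_lt_0_compat; lra).
  set (UX := (X, X)). set (AK := (K, 2 * K)). set (E := (e, e)).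
  assert (HUX : posv UX) by (unfold UX, posv, in_domain; simpl; lra).
  assert (HAK : posv AK) by (unfold AK, posv, in_domain; simpl; lra).
  assert (HE : posv E) by (unfold E, posv, in_domain; simpl; lra).
  assert (Hupos : posv u) by (split; assumption).
  set (p1 := mkp i UX AK). set (p2 := mkp i u E).
  assert (Hd1 : forall j, in_domain (p1 j)) by (intro j; apply (mkp_pos i UX AK HUX HAK j)).
  assert (Hd2 : forall j, in_domain (p2 j)) by (intro j; apply (mkp_pos i u E Hupos HE j)).
  assert (H1 : alloc t (follow S p1) i = 0%nat).
  { destruct (alloc t (follow S p1) i) as [|n] eqn:Ea; [reflexivity|exfalso].
    pose proof (feas_alloc_i M t Hf (follow S p1) i) as Hfe. rewrite Ea in Hfe.
    pose proof (Happ p1 Hd1) as Ha. unfold p1 in Ha. rewrite welfare_mkp in Ha.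
    fold p1 in Ha. rewrite Ea in Ha.
    assert (Hopt : 2 * K <= OPT p1).
    { pose proof (OPT_mkp i UX AK 0 2 ltac:(simpl; tauto) ltac:(simpl; tauto)) as Ho.
      eapply Rle_trans; [|exact Ho]. unfold AK, UX; simpl; lra. }
    assert (Hv1 : val UX (Datatypes.S n) = X) by (destruct n; reflexivity).
    assert (Hv2 : val AK (alloc t (follow S p1) (negb i)) <= K).
    { destruct (alloc t (follow S p1) (negb i)) as [|[|m]]; simpl; lia || lra. }
    rewrite Hv1 in Ha.
    assert (c * (X + val AK (alloc t (follow S p1) (negb i))) <= c * (X + K)).
    { apply Rmult_le_compat_l; lra. }
    nra. }
  assert (H2 : utility UX t (follow S p1) i <= 0).
  { unfold utility. rewrite H1. simpl. pose proof (nnt_pay M t Hnnt (follow S p1) i). lra. }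
  assert (H3 : (1 <= alloc t (follow S p2) i)%nat).
  { destruct (alloc t (follow S p2) i) as [|n] eqn:Ea; [exfalso|lia].
    pose proof (Happ p2 Hd2) as Ha. unfold p2 in Ha. rewrite welfare_mkp in Ha.
    fold p2 in Ha. rewrite Ea in Ha.
    assert (Hopt : fst u <= OPT p2).
    { pose proof (OPT_mkp i u E 1 0 ltac:(simpl; tauto) ltac:(simpl; tauto)) as Ho.
      eapply Rle_trans; [|exact Ho]. unfold E; simpl; lra. }
    assert (Hv2 : val E (alloc t (follow S p2) (negb i)) <= e).
    { destruct (alloc t (follow S p2) (negb i)) as [|[|m]]; simpl; lra. }
    simpl val at 1 in Ha.
    assert (c * (0 + val E (alloc t (follow S p2) (negb i))) <= c * e).
    { apply Rmult_le_compat_l; lra. }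
    nra. }
  assert (H4 : utility UX t (follow S p2) i > 0).
  { pose proof (Hir p2 Hd2 i) as Hi. unfold p2 in Hi. rewrite mkp_i in Hi. fold p2 in Hi.
    unfold utility in *.
    pose proof (val_le2 u (alloc t (follow S p2) i) Hud).
    assert (val UX (alloc t (follow S p2) i) = X).
    { destruct (alloc t (follow S p2) i) as [|[|m]]; [lia|reflexivity|reflexivity]. }
    lra. }
  assert (Hon1 : on_path t (override (follow S p1) i (S i UX)) h i).
  { unfold p1. rewrite override_follow. apply Hon; assumption. }
  assert (Hon2 : on_path t (follow S p2) h i) by (apply Hon; assumption).
  assert (Hne2 : follow S p2 i h <> S i UX h).
  { unfold follow, p2. rewrite mkp_i. exact Hne. }
  pose proof (Hosp i UX (proj1 HUX) h (follow S p1) (follow S p2) Hon1 Hon2 Hne2) as Hod.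
  unfold p1 in Hod. rewrite override_follow in Hod. fold p1 in Hod.
  lra.
Qed.

Definition A1 : valuation := (1, 2).

Lemma A1_pos : posv A1.
Proof. unfold A1, posv, in_domain; simpl; lra. Qed.

Lemma split_contra : forall (M : Type) (t : mech M) (S : bidder -> strategy M) c i h v v',
  feasible_mech t -> OSP t S -> individually_rational t S -> no_negative_transfers t ->
  0 < c -> c < 2 ->
  (forall w : bidder -> valuation, (forall j, in_domain (w j)) -> OPT w <= c * welfare t S w) ->
  posv v -> posv v' ->
  (forall x y, posv x -> posv y -> on_path t (follow S (mkp i x y)) h i) ->
  S i v h <> S i v' h -> False.
Proof.
  intros M t S c i h v v' Hf Hosp Hir Hnnt Hc0 Hc2 Happ Hv Hv' Hon Hne.
  set (X := 2 * (fst v + fst v') + 1).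
  assert (0 < fst v) by apply Hv. assert (0 < fst v') by apply Hv'.
  destruct (classic (S i v h = S i (X, X) h)) as [Heq | Hneq].
  - apply (core M t S c i h v' X Hf Hosp Hir Hnnt Hc0 Hc2 Happ Hv'); [unfold X; lra | exact Hon |].
    intro Heq'. apply Hne. congruence.
  - apply (core M t S c i h v X Hf Hosp Hir Hnnt Hc0 Hc2 Happ Hv); [unfold X; lra | exact Hon | exact Hneq].
Qed.

Definition reaches {M : Type} (t s : mech M) (h : list M) (B : profile M) : Prop :=
  (exists pre, path_from t nil B = pre ++ path_from s h B) /\ run_from t nil B = run_from s h B.

Lemma val_A1_sum : forall a b, (a + b <= 2)%nat -> val A1 a + val A1 b <= 2.
Proof.
  intros a b H. destruct a as [|[|[|a]]]; destruct b as [|[|[|b]]]; simpl; try lra; lia.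
Qed.

Lemma main_ind : forall (M : Type) (t : mech M) (S : bidder -> strategy M) c,
  feasible_mech t -> OSP t S -> individually_rational t S -> no_negative_transfers t ->
  0 < c -> c < 2 ->
  (forall w : bidder -> valuation, (forall j, in_domain (w j)) -> OPT w <= c * welfare t S w) ->
  forall s h, (forall v : bidder -> valuation, (forall j, posv (v j)) -> reaches t s h (follow S v)) -> False.
Proof.
  intros M t S c Hf Hosp Hir Hnnt Hc0 Hc2 Happ s.
  induction s as [a p | b ch IH]; intros h Hreach.
  -
    set (e := (2 - c) / (2 * c)).
    assert (He : 2 * c * e = 2 - c) by (unfold e; field; lra).
    assert (Hepos : 0 < e) by (unfold e; apply Rdiv_lt_0_compat; lra).
    set (E := (e, e)).
    assert (HE : posv E) by (unfold E, posv, in_domain; simpl; lra).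
    set (P1 := mkp true A1 E). set (P2 := mkp true E A1).
    assert (Hp1 : forall j, posv (P1 j)) by (apply mkp_pos; [apply A1_pos | exact HE]).
    assert (Hp2 : forall j, posv (P2 j)) by (apply mkp_pos; [exact HE | apply A1_pos]).
    assert (Ha1 : forall j, alloc t (follow S P1) j = a j).
    { intro j. unfold alloc, outcome. rewrite (proj2 (Hreach P1 Hp1)). reflexivity. }
    assert (Ha2 : forall j, alloc t (follow S P2) j = a j).
    { intro j. unfold alloc, outcome. rewrite (proj2 (Hreach P2 Hp2)). reflexivity. }
    pose proof (feas_alloc M t Hf (follow S P1)) as Hfe. rewrite !Ha1 in Hfe.
    assert (W1 : OPT P1 <= c * (val A1 (a true) + val E (a false))).
    { pose proof (Happ P1 (fun j => proj1 (Hp1 j))) as H. unfold welfare in H.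
      rewrite !Ha1 in H. exact H. }
    assert (W2 : OPT P2 <= c * (val E (a true) + val A1 (a false))).
    { pose proof (Happ P2 (fun j => proj1 (Hp2 j))) as H. unfold welfare in H.
      rewrite !Ha2 in H. exact H. }
    assert (O1 : 2 <= OPT P1).
    { eapply Rle_trans; [|apply (OPT_ge P1 2 0); simpl; tauto]. simpl; lra. }
    assert (O2 : 2 <= OPT P2).
    { eapply Rle_trans; [|apply (OPT_ge P2 0 2); simpl; tauto]. simpl; lra. }
    pose proof (val_A1_sum _ _ Hfe) as HA.
    assert (HE1 : val E (a true) <= e) by (destruct (a true) as [|[|]]; simpl; lra).
    assert (HE2 : val E (a false) <= e) by (destruct (a false) as [|[|]]; simpl; lra).
    assert (c * (val A1 (a true) + val E (a false)) + c * (val E (a true) + val A1 (a false))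
            <= c * (2 + 2 * e)).
    { rewrite <- Rmult_plus_distr_l. apply Rmult_le_compat_l; lra. }
    nra.
  -
    assert (Hon : forall v, (forall j, posv (v j)) -> on_path t (follow S v) h b).
    { intros v Hv. destruct (Hreach v Hv) as [[pre Hpre] _]. unfold on_path.
      rewrite Hpre. simpl. apply in_or_app. right. left. reflexivity. }
    destruct (classic (exists x, posv x /\ S b x h <> S b A1 h)) as [[x [Hx Hne]] | Hno].
    + apply (split_contra M t S c b h x A1 Hf Hosp Hir Hnnt Hc0 Hc2 Happ Hx A1_pos); [|exact Hne].
      intros y z Hy Hz. apply Hon. apply mkp_pos; assumption.
    + apply (IH (S b A1 h) (h ++ (S b A1 h :: nil))).
      intros v Hv.
      assert (HB : follow S v b h = S b A1 h).
      { unfold follow. apply NNPP. intro Hc. apply Hno. exists (v b). split; [apply Hv | exact Hc]. }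
      destruct (Hreach v Hv) as [[pre Hpre] Hrun].
      simpl in Hpre, Hrun. rewrite HB in Hpre, Hrun.
      split.
      * exists (pre ++ (h, b) :: nil). rewrite Hpre. rewrite <- app_assoc. reflexivity.
      * exact Hrun.
Qed.

Theorem theorem3p12 :
  forall (M : Type) (t : mech M) (S : bidder -> strategy M),
    feasible_mech t ->
    OSP t S ->
    individually_rational t S ->
    no_negative_transfers t ->
    ~ (exists c : R, c < 2 /\
         forall v : bidder -> valuation, (forall j, in_domain (v j)) ->
           OPT v <= c * welfare t S v).
Proof.
  intros M t S Hf Hosp Hir Hnnt [c [Hc2 Happ]].
  destruct (Rle_or_lt c 0) as [Hc0 | Hc0].
  - set (P := mkp true A1 A1).
    assert (Hd : forall j, in_domain (P j)) by (intro j; apply (mkp_pos true A1 A1 A1_pos A1_pos j)).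
    pose proof (Happ P Hd) as H.
    assert (O1 : 2 <= OPT P).
    { eapply Rle_trans; [|apply (OPT_ge P 2 0); simpl; tauto]. simpl; lra. }
    assert (0 <= welfare t S P).
    { unfold welfare. pose proof (val_nonneg _ (alloc t (follow S P) true) (Hd true)).
      pose proof (val_nonneg _ (alloc t (follow S P) false) (Hd false)). lra. }
    nra.
  - apply (main_ind M t S c Hf Hosp Hir Hnnt Hc0 Hc2 Happ t nil).
    intros v Hv. split.
    + exists nil. reflexivity.
    + reflexivity.
Qed.
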